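(* Let $d$ be a positive integer and let $\omega_N\subset\mathbb{S}^{d-1}$ be a set of $N$ distinct points. Assume that for any three distinct points $x,y,z\in\omega_N$, $$\langle x,y\rangle\langle x,z\rangle\langle y,z\rangle<0.$$ Then $N\le d+1$.
   Context: $\langle\cdot,\cdot\rangle$ is the Euclidean inner product and $\mathbb{S}^{d-1}$ is the unit sphere in $\mathbb{R}^d$. *)

(* Defs.v *)
From mathcomp Require Import all_boot all_order all_algebra.
From mathcomp Require Import reals.
Set Implicit Arguments. Unset Strict Implicit. Unset Printing Implicit Defensive.
Import Order.TTheory GRing.Theory Num.Theory.
Local Open Scope ring_scope.

Definition inner (R : realType) (d : nat) (x y : 'rV[R]_d) : R :=
  \sum_(k < d) x 0 k * y 0 k.

Definition on_sphere (R : realType) (d : nat) (x : 'rV[R]_d) : Prop :=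
  inner x x = 1.

(* Main.v *)
Require Import Defs.
From mathcomp Require Import all_boot all_order all_algebra.
From mathcomp Require Import reals.
From mathcomp Require Import zify ring lra.
Import Order.TTheory GRing.Theory Num.Theory.
Local Open Scope ring_scope.

Lemma innerC (R : realType) d (x y : 'rV[R]_d) : inner x y = inner y x.
Proof. by apply: eq_bigr => k _; rewrite mulrC. Qed.

Lemma innerZl (R : realType) d a (x y : 'rV[R]_d) : inner (a *: x) y = a * inner x y.
Proof. rewrite /inner mulr_sumr; apply: eq_bigr => k _; by rewrite mxE mulrA. Qed.

Lemma innerZr (R : realType) d a (x y : 'rV[R]_d) : inner x (a *: y) = a * inner x y.
Proof. by rewrite innerC innerZl innerC. Qed.

Lemma innerNl (R : realType) d (x y : 'rV[R]_d) : inner (- x) y = - inner x y.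
Proof. by rewrite -scaleN1r innerZl mulN1r. Qed.

Lemma inner_ge0 (R : realType) d (x : 'rV[R]_d) : 0 <= inner x x.
Proof. by apply: sumr_ge0 => k _; rewrite -expr2 sqr_ge0. Qed.

Lemma inner_eq0 (R : realType) d (x : 'rV[R]_d) : inner x x = 0 -> x = 0.
Proof.
move=> h.
apply/rowP => k; rewrite mxE; apply/eqP; rewrite -sqrf_eq0 expr2.
by apply/eqP; apply: (psumr_eq0P _ h) => // i _; rewrite -expr2 sqr_ge0.
Qed.

Lemma inner_sum (R : realType) m d (f : 'I_m -> R) (u : 'I_m -> 'rV[R]_d) y :
  inner (\row_k \sum_i f i * u i 0 k) y = \sum_i f i * inner (u i) y.
Proof.
rewrite /inner.
under eq_bigr => k _ do rewrite mxE big_distrl /=.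
rewrite exchange_big; apply: eq_bigr => i _; rewrite mulr_sumr.
by apply: eq_bigr => k _; rewrite mulrA.
Qed.

Lemma neg_bound (R : realType) d m (v : 'I_m.+1 -> 'rV[R]_d) :
  (forall i j, i != j -> inner (v i) (v j) < 0) -> (m <= d)%N.
Proof.
move=> hv.
pose u (i : 'I_m) := v (widen_ord (leqnSn m) i).
have hu : forall i j, i != j -> inner (u i) (u j) < 0.
  move=> i j ij; apply: hv; apply: contra ij => /eqP/(congr1 val) /= eqij.
  by apply/eqP/val_inj.
have hul : forall i, inner (u i) (v ord_max) < 0.
  move=> i; apply: hv; apply/eqP => /(congr1 val) /= h.
  by have := ltn_ord i; rewrite h ltnn.
have key : forall c : 'I_m -> R, (\row_k \sum_i c i * u i 0 k = 0) -> forall i, c i = 0.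
  move=> c hc.
  pose a i := if 0 <= c i then c i else 0.
  pose b i := if 0 <= c i then 0 else - c i.
  have hab : forall i, c i = a i - b i.
    by move=> i; rewrite /a /b; case: ifP => _; rewrite ?subr0 ?sub0r ?opprK.
  have ha0 : forall i, 0 <= a i by move=> i; rewrite /a; case: ifP.
  have hb0 : forall i, 0 <= b i.
    move=> i; rewrite /b; case: ifP => h //; by rewrite oppr_ge0 ltW // ltNge h.
  have hab0 : forall i, a i * b i = 0.
    by move=> i; rewrite /a /b; case: ifP => _; rewrite ?mulr0 ?mul0r.
  pose p := \row_k \sum_i a i * u i 0 k.
  pose q := \row_k \sum_i b i * u i 0 k.
  have hpq : p = q.
    apply/rowP => k; move/rowP: hc => /(_ k); rewrite !mxE.
    under eq_bigr => i _ do rewrite hab mulrBl.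
    by rewrite sumrB => /eqP; rewrite subr_eq0 => /eqP.
  have hpp : inner p p <= 0.
    rewrite {2}hpq inner_sum; apply: sumr_le0 => i _.
    rewrite innerC inner_sum mulr_sumr; apply: sumr_le0 => j _.
    case: (eqVneq i j) => [->|ij]; first by rewrite mulrA hab0 mul0r.
    rewrite mulrA; apply: mulr_ge0_le0; first by apply: mulr_ge0.
    by apply: ltW; apply: hu; rewrite eq_sym.
  have p0 : p = 0 by apply: inner_eq0; apply/eqP; rewrite eq_le hpp inner_ge0.
  have q0 : q = 0 by rewrite -hpq.
  have gen : forall (f : 'I_m -> R), (forall i, 0 <= f i) ->
      (\row_k \sum_i f i * u i 0 k = 0) -> forall i, f i = 0.
    move=> f hf hf0 i.
    have : inner (\row_k \sum_i f i * u i 0 k) (v ord_max) = 0.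
      by rewrite hf0 /inner big1 // => k _; rewrite mxE mul0r.
    rewrite inner_sum => h.
    have h' : \sum_i - (f i * inner (u i) (v ord_max)) = 0 by rewrite sumrN h oppr0.
    have hpos : forall j, true -> 0 <= - (f j * inner (u j) (v ord_max)).
      move=> j _; rewrite oppr_ge0; apply: mulr_ge0_le0 => //; exact: ltW.
    have /eqP := (psumr_eq0P hpos h') i isT.
    rewrite oppr_eq0 mulf_eq0 => /orP [/eqP //|/eqP hh].
    by have := hul i; rewrite hh ltxx.
  move=> i; rewrite hab (gen a ha0 p0 i) (gen b hb0 q0 i) subr0 //.
pose M : 'M[R]_(m, d) := \matrix_(i, k) u i 0 k.
have hker : kermx M = 0.
  apply/row_matrixP => i; rewrite row0.
  set r := row i (kermx M).
  have hr : r *m M = 0 by rewrite /r -row_mul mulmx_ker row0.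
  apply/rowP => j; rewrite [RHS]mxE.
  apply: (key (fun l => r 0 l)).
  apply/rowP => k; move/rowP: hr => /(_ k); rewrite !mxE => hk.
  rewrite -[RHS]hk; by apply: eq_bigr => l _; rewrite !mxE.
have := mxrank_ker M; rewrite hker mxrank0 => /esym/eqP; rewrite subn_eq0 => h.
exact: leq_trans h (rank_leq_col M).
Qed.

Lemma pick3 m (i j : 'I_m) : (2 < m)%N -> exists k : 'I_m, (k != i) && (k != j).
Proof.
move=> hm.
have hc : (0 < #|[set: 'I_m] :\ i :\ j|)%N.
  have h1 := cardsD1 j ([set: 'I_m] :\ i).
  have h2 := cardsD1 i [set: 'I_m].
  rewrite cardsT card_ord in h2.
  move: h1 h2.
  set c1 := #|[set: 'I_m] :\ i :\ j|; set c2 := #|[set: 'I_m] :\ i|.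
  case: (j \in _); case: (i \in _) => /= h1 h2; lia.
have [k] : exists k, k \in [set: 'I_m] :\ i :\ j.
  by apply/set0Pn; rewrite -card_gt0.
by rewrite !in_setD1 => /and3P [kj ki _]; exists k; rewrite ki kj.
Qed.

Theorem theorem3p3 (R : realType) (d N : nat) (x : 'I_N -> 'rV[R]_d) :
  (0 < d)%N ->
  injective x ->
  (forall i, on_sphere (x i)) ->
  (forall i j k, i != j -> i != k -> j != k ->
     inner (x i) (x j) * inner (x i) (x k) * inner (x j) (x k) < 0) ->
  (N <= d.+1)%N.
Proof.
move=> d0 _ _ hx.
case: (leqP N 2) => [hN|hN]; first by apply: leq_trans hN _.
case: N x hx hN => [|m] x hx hN //.
pose s i : R := if 0 < inner (x ord0) (x i) then 1 else -1.
pose z i := if i == ord0 then - x ord0 else s i *: x i.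
suff : (m <= d)%N by [].
apply: (@neg_bound R d m z).
have nz : forall i, i != ord0 -> inner (x ord0) (x i) != 0.
  move=> i i0; have [k /andP [k0 ki]] := @pick3 m.+1 ord0 i hN.
  have := hx ord0 i k.
  rewrite [ord0 == i]eq_sym [ord0 == k]eq_sym [i == k]eq_sym i0 k0 ki => /(_ isT isT isT) H.
  apply/eqP => h0; move: H; rewrite h0 !mul0r.
  by rewrite ltxx.
have sa : forall i, i != ord0 -> 0 < s i * inner (x ord0) (x i).
  move=> i i0; rewrite /s; case: ifP => h; first by rewrite mul1r.
  by rewrite mulN1r oppr_gt0 lt_neqAle nz //= leNgt h.
have ss : forall i, s i * s i = 1.
  by move=> i; rewrite /s; case: ifP => _; rewrite ?mul1r ?mulN1r ?opprK.
have h0 : forall j, j != ord0 -> inner (z ord0) (z j) < 0.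
  move=> j j0; rewrite /z eqxx (negbTE j0) innerNl innerZr oppr_lt0; exact: sa.
move=> i j.
case: (eqVneq i ord0) => [-> ij|i0 ij].
  by apply: h0; rewrite eq_sym.
case: (eqVneq j ord0) ij => [-> ij|j0 ij].
  by rewrite innerC; apply: h0.
rewrite /z (negbTE i0) (negbTE j0) innerZl innerZr.
have := hx ord0 i j.
rewrite [ord0 == i]eq_sym [ord0 == j]eq_sym i0 j0 ij => /(_ isT isT isT) H.
rewrite -(pmulr_rlt0 _ (mulr_gt0 (sa i i0) (sa j j0))).
have -> : s i * inner (x ord0) (x i) * (s j * inner (x ord0) (x j)) *
    (s i * (s j * inner (x i) (x j))) = (s i * s i) * (s j * s j) *
    (inner (x ord0) (x i) * inner (x ord0) (x j) * inner (x i) (x j)) by ring.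
by rewrite !ss !mul1r.
Qed.
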